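(* Let ${\mathcal M}:{\mathbb E}\to{\mathbb F}$ be a surjective linear map between finite-dimensional Euclidean spaces, $\mathcal{K}\subseteq{\mathbb E}$ a convex cone, $b\in{\mathbb F}$, and suppose ${\mathcal F}=\{X\in\mathcal{K}:{\mathcal M}(X)=b\}\neq\emptyset$. Then the singularity degree of the system ${\mathcal F}$ over $\mathcal{K}$ equals the singularity degree of the face $\operatorname{face}(b,{\mathcal M}(\mathcal{K}))$ over the cone ${\mathcal M}(\mathcal{K})$. *)

(* Defs.v *)
(* Euclidean spaces E = R^n, F = R^m realised as row vectors
   'rV[R]_n with the standard inner product; a linear map E -> F is X |-> X *m A
   for a matrix A : 'M_(n, m); its adjoint is y |-> y *m A^T. *)
From HB Require Import structures.
From mathcomp Require Import all_boot all_order all_algebra.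
Set Implicit Arguments. Unset Strict Implicit. Unset Printing Implicit Defensive.
Import Order.TTheory GRing.Theory Num.Theory.
Local Open Scope ring_scope.

Section Defs.
Variable R : realFieldType.

Definition dotv (n : nat) (u v : 'rV[R]_n) : R := \sum_(i < n) u 0 i * v 0 i.

Definition is_convex_cone (n : nat) (K : 'rV[R]_n -> Prop) : Prop :=
  (forall x t, K x -> 0 <= t -> K (t *: x)) /\
  (forall x y t, K x -> K y -> 0 <= t -> t <= 1 -> K (t *: x + (1 - t) *: y)).

Definition is_face (n : nat) (C G : 'rV[R]_n -> Prop) : Prop :=
  (forall x, G x -> C x) /\
  (forall x y t, G x -> G y -> 0 <= t -> t <= 1 -> G (t *: x + (1 - t) *: y)) /\
  (forall x y t, C x -> C y -> 0 < t -> t < 1 -> G (t *: x + (1 - t) *: y) ->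
     G x /\ G y).

Definition min_face (n : nat) (S C : 'rV[R]_n -> Prop) : 'rV[R]_n -> Prop :=
  fun x => forall G, is_face C G -> (forall s, S s -> G s) -> G x.

Definition dual_cone (n : nat) (C : 'rV[R]_n -> Prop) : 'rV[R]_n -> Prop :=
  fun v => forall x, C x -> 0 <= dotv v x.

Definition is_exposed_face (n : nat) (C G : 'rV[R]_n -> Prop) : Prop :=
  exists v, dual_cone C v /\ (forall x, G x <-> (C x /\ dotv v x = 0)).

Definition face_chain (n : nat) (C f : 'rV[R]_n -> Prop) (d : nat) : Prop :=
  exists Fs : nat -> 'rV[R]_n -> Prop,
    (forall x, Fs 0%N x <-> C x) /\
    (forall i, (i < d)%N -> is_exposed_face (Fs i) (Fs i.+1)) /\
    (forall x, Fs d x <-> f x).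

Definition face_sd (n : nat) (C f : 'rV[R]_n -> Prop) (d : nat) : Prop :=
  face_chain C f d /\ forall d', (d' < d)%N -> ~ face_chain C f d'.

Definition feas_set (n m : nat) (A : 'M[R]_(n, m)) (K : 'rV[R]_n -> Prop)
  (b : 'rV[R]_m) : 'rV[R]_n -> Prop := fun X => K X /\ X *m A = b.

Definition fr_sequence (n m : nat) (A : 'M[R]_(n, m)) (K : 'rV[R]_n -> Prop)
  (b : 'rV[R]_m) (d : nat) : Prop :=
  exists (ys : nat -> 'rV[R]_m) (Ks : nat -> 'rV[R]_n -> Prop),
    (forall x, Ks 0%N x <-> K x) /\
    (forall i, (i < d)%N ->
       dual_cone (Ks i) (ys i *m A^T) /\ dotv b (ys i) = 0 /\
       (forall x, Ks i.+1 x <-> (Ks i x /\ dotv (ys i *m A^T) x = 0))) /\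
    (forall x, Ks d x <-> min_face (feas_set A K b) K x).

Definition system_sd (n m : nat) (A : 'M[R]_(n, m)) (K : 'rV[R]_n -> Prop)
  (b : 'rV[R]_m) (d : nat) : Prop :=
  fr_sequence A K b d /\ forall d', (d' < d)%N -> ~ fr_sequence A K b d'.

Definition image_set (n m : nat) (A : 'M[R]_(n, m)) (K : 'rV[R]_n -> Prop)
  : 'rV[R]_m -> Prop := fun z => exists X, K X /\ z = X *m A.

End Defs.

(* Main.v *)
Require Import Defs.
From mathcomp Require Import all_boot all_order all_algebra.
From mathcomp Require Import reals.
From mathcomp Require Import ring lra.
From Stdlib Require Import ClassicalEpsilon.
Import Order.TTheory GRing.Theory Num.Theory.
Local Open Scope ring_scope.

Section Aux.
Variable R : realFieldType.

Lemma dotvC n (u v : 'rV[R]_n) : dotv u v = dotv v u.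
Proof. by apply: eq_bigr => i _; rewrite mulrC. Qed.

Lemma dotv_mulmx n m (A : 'M[R]_(n,m)) (v : 'rV[R]_m) (x : 'rV[R]_n) :
  dotv v (x *m A) = dotv (v *m A^T) x.
Proof.
rewrite /dotv.
under eq_bigr => j _ do rewrite mxE big_distrr.
under [RHS]eq_bigr => i _ do rewrite mxE big_distrl.
rewrite exchange_big; apply: eq_bigr => i _; apply: eq_bigr => j _.
rewrite ?mxE; change (v 0 j * (x 0 i * A i j) = (v 0 j * A i j) * x 0 i); ring.
Qed.

Lemma coneD n (K : 'rV[R]_n -> Prop) x y :
  is_convex_cone K -> K x -> K y -> K (x + y).
Proof.
move=> [HZ HC] Kx Ky.
have h2 : (0 : R) <= 2^-1 by rewrite invr_ge0 ler0n.
have h3 : (2 : R)^-1 <= 1 by rewrite invf_le1 ?ltr0n // ler1n.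
have h := HC x y (2^-1) Kx Ky h2 h3.
have -> : x + y = 2 *: (2^-1 *: x + (1 - 2^-1) *: y).
  rewrite scalerDr !scalerA.
  have -> : (2 : R) * 2^-1 = 1 by rewrite mulfV ?pnatr_eq0.
  have -> : (2 : R) * (1 - 2^-1) = 1.
    by rewrite mulrBr mulr1 mulfV ?pnatr_eq0 // -addrA subrr addr0 ?pnatr_eq0.
  by rewrite !scale1r.
by apply: HZ => //; rewrite ler0n.
Qed.

Lemma image_cone n m (A : 'M[R]_(n,m)) K :
  is_convex_cone K -> is_convex_cone (image_set A K).
Proof.
move=> [HZ HC]; split.
- move=> _ t [x [Kx ->]] t0; exists (t *: x); split; first exact: HZ.
  by rewrite scalemxAl.
- move=> _ _ t [x [Kx ->]] [y [Ky ->]] t0 t1; exists (t *: x + (1-t) *: y).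
  split; first exact: HC.
  by rewrite mulmxDl -!scalemxAl.
Qed.

Definition Dset {m} (C : 'rV[R]_m -> Prop) b z :=
  C z /\ exists w l, C w /\ 1 < l /\ l *: b = z + w.

Lemma Dset_extr m (C : 'rV[R]_m -> Prop) b x y t : is_convex_cone C -> C x -> C y ->
  0 < t -> t < 1 -> Dset C b (t *: x + (1-t) *: y) -> Dset C b x.
Proof.
move=> HC Cx Cy t0 t1 [_ [w [l [Cw [l1 E]]]]].
split=> //.
exists (t^-1 *: ((1-t) *: y + w)), (l / t); split.
- apply: HC.1; last by rewrite invr_ge0 ltW.
  apply: coneD => //; apply: HC.1 => //; lra.
split; first by rewrite ltr_pdivlMr // mul1r; lra.
rewrite mulrC -scalerA E -addrA scalerDr scalerA mulVf ?lt0r_neq0 //.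
by rewrite scale1r.
Qed.

Lemma Dset_face m (C : 'rV[R]_m -> Prop) b :
  is_convex_cone C -> is_face C (Dset C b).
Proof.
move=> HC; split; first by move=> x [].
split.
- move=> x y t [Cx [w1 [l1 [Cw1 [l11 E1]]]]] [Cy [w2 [l2 [Cw2 [l21 E2]]]]] t0 t1.
  split; first exact: HC.2.
  exists (t *: w1 + (1-t) *: w2), (t * l1 + (1-t) * l2); split; first exact: HC.2.
  split.
    have h1 : 0 <= t * (l1 - 1) by apply: mulr_ge0; lra.
    case: (ltrP t 1) => ht.
    * have h2 : 0 < (1 - t) * (l2 - 1) by apply: mulr_gt0; lra.
      have -> : t * l1 + (1 - t) * l2 = 1 + t * (l1 - 1) + (1 - t) * (l2 - 1) by ring.
      lra.
    * have -> : t = 1 by lra.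
      lra.
  rewrite scalerDl -!scalerA E1 E2 !scalerDr.
  by rewrite addrACA.
- move=> x y t Cx Cy t0 t1 H; split; first exact: Dset_extr H.
  apply: (@Dset_extr _ _ _ y x (1 - t)) => //; try lra.
  have e : 1 - (1 - t) = t by ring.
  by rewrite e addrC.
Qed.

Lemma Dset_b m (C : 'rV[R]_m -> Prop) b : C b -> Dset C b b.
Proof.
move=> Cb; split=> //; exists b, 2; split=> //; split; first lra.
by rewrite scaler_nat mulr2n.
Qed.

Lemma mf_Dset m (C : 'rV[R]_m -> Prop) b z : is_convex_cone C -> C b ->
  min_face (fun z => z = b) C z -> Dset C b z.
Proof.
move=> HC Cb H; apply: H; first exact: Dset_face.
by move=> s ->; exact: Dset_b.
Qed.

Lemma key n m (A : 'M[R]_(n,m)) K b x : is_convex_cone K ->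
  (exists X, feas_set A K b X) ->
  min_face (feas_set A K b) K x <->
  K x /\ min_face (fun z => z = b) (image_set A K) (x *m A).
Proof.
move=> HK [X0 [KX0 EX0]].
have Cb : image_set A K b by exists X0.
have HC := @image_cone _ _ A K HK.
split.
- move=> H; apply: (H (fun y => K y /\ min_face (fun z => z = b) (image_set A K) (y *m A))).
  + split; first by move=> y [].
    split.
    * move=> y1 y2 t [K1 G1] [K2 G2] t0 t1; split; first exact: HK.2.
      move=> G HG Hb; rewrite mulmxDl -!scalemxAl.
      apply: HG.2.1 => //; [exact: G1 | exact: G2].
    * move=> y1 y2 t K1 K2 t0 t1 [Km Gm].
      have gm : forall G, is_face (image_set A K) G -> (forall s, s = b -> G s) ->
          G (y1 *m A) /\ G (y2 *m A).
        move=> G HG Hb; apply: (HG.2.2 _ _ t) => //; [by exists y1 | by exists y2 |].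
        by have := Gm G HG Hb; rewrite mulmxDl -!scalemxAl.
      by split; split => // G HG Hb; case: (gm G HG Hb).
  + move=> y [Ky Ey]; split => //; rewrite Ey => G _ Hb; exact: Hb.
- move=> [Kx Gx] G HG HF.
  have [_ [w [l [[x' [Kx' ->]] [l1 E]]]]] := @mf_Dset _ _ _ _ HC Cb Gx.
  have l0 : 0 < l by lra.
  pose u := l^-1 *: (x + x').
  have Ku : K u by apply: HK.1; [exact: coneD | rewrite invr_ge0 ltW].
  have Fu : feas_set A K b u.
    split=> //; rewrite /u -scalemxAl mulmxDl -E scalerA mulVf ?lt0r_neq0 //.
    by rewrite scale1r.
  have Gu := HF u Fu.
  have Ky : K ((l - 1)^-1 *: x') by apply: HK.1 => //; rewrite invr_ge0; lra.
  have eu : u = l^-1 *: x + (1 - l^-1) *: ((l - 1)^-1 *: x').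
    rewrite /u scalerDr scalerA; congr (_ + _ *: _).
    have l10 : l - 1 != 0 by rewrite subr_eq0 gt_eqF.
    have ln0 : l != 0 by rewrite lt0r_neq0.
    have e : 1 - l^-1 = (l - 1) / l by rewrite mulrBl mulfV // mul1r.
    by rewrite e mulrAC mulfV // mul1r.
  rewrite eu in Gu.
  have := HG.2.2 _ _ (l^-1) Kx Ky _ _ Gu.
  case => //; first by rewrite invr_gt0.
  by rewrite invf_lt1.
Qed.

Lemma equiv n m (A : 'M[R]_(n,m)) K b d : is_convex_cone K ->
  (exists X, feas_set A K b X) ->
  fr_sequence A K b d <->
  face_chain (image_set A K) (min_face (fun z => z = b) (image_set A K)) d.
Proof.
move=> HK Hfe.
have [X0 [KX0 EX0]] := Hfe.
have Cb : image_set A K b by exists X0.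
have HC := @image_cone _ _ A K HK.
split.
- move=> [ys [Ks [H0 [Hs Hd]]]].
  exists (fun i z => exists x, Ks i x /\ z = x *m A); split; [|split].
  + move=> z; split; move=> [x [kx ->]]; exists x; split => //.
    * exact: (H0 x).1.
    * exact: (H0 x).2.
  + move=> i lt; have [Hdual [_ Hnext]] := Hs i lt; exists (ys i); split.
    * move=> _ [x [kx ->]]; rewrite dotv_mulmx; exact: Hdual.
    * move=> z; split.
      -- move=> [x [kx ->]]; have [k1 e] := (Hnext x).1 kx.
         split; first by exists x.
         by rewrite dotv_mulmx.
      -- move=> [[x [kx ->]] e]; exists x; split=> //; apply/(Hnext x).2.
         by split => //; rewrite -dotv_mulmx.
  + move=> z; split.
    * move=> [x [kx ->]]; have := (@key _ _ A K b x HK Hfe).1 ((Hd x).1 kx); by case.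
    * move=> Gz; have [[x [Kx Ez]] _] := @mf_Dset _ _ _ _ HC Cb Gz.
      exists x; split=> //; apply: (proj2 (Hd x)); apply: (proj2 (@key _ _ A K b x HK Hfe)).
      by rewrite -Ez.
- move=> [Fs [H0 [Hs Hd]]].
  have ex : forall i, exists v, (i < d)%N -> dual_cone (Fs i) v /\
      forall z, Fs i.+1 z <-> (Fs i z /\ dotv v z = 0).
    move=> i; case: (ltnP i d) => hi.
    * have [v [hv1 hv2]] := Hs i hi; exists v => _; split => // z; exact: hv2.
    * by exists 0.
  pose ch := fun i => constructive_indefinite_description _ (ex i).
  have mono : forall j, (j <= d)%N -> forall k, (k <= j)%N -> forall z, Fs j z -> Fs k z.
    elim=> [|j IH] hj k hk z hz.
    * by move: hk; rewrite leqn0 => /eqP ->.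
    * rewrite leq_eqVlt in hk; case/orP: hk => [/eqP -> // | hk].
      apply: (IH (ltnW hj) k hk).
      have [v [_ h]] := Hs j hj.
      exact: ((h z).1 hz).1.
  have Fdb : Fs d b by apply: (Hd b).2 => G _ Hb; exact: Hb.
  exists (fun i => proj1_sig (ch i)), (fun i x => K x /\ Fs i (x *m A)).
  split; [|split].
  + move=> x; split; first by case.
    move=> kx; split=> //; apply/(H0 _).2; by exists x.
  + move=> i hi; have [hdual hnext] := proj2_sig (ch i) hi; split; [|split].
    * move=> x [kx fx]; rewrite -dotv_mulmx; exact: hdual.
    * have fb : Fs i.+1 b := mono d (leqnn d) i.+1 hi b Fdb.
      by rewrite dotvC; have [_ ] := (hnext b).1 fb.
    * move=> x; split.
      -- move=> [kx f1]; have [f0 e] := (hnext _).1 f1.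
         by split; [by [] | rewrite -dotv_mulmx].
      -- move=> [[kx f0] e]; split=> //; apply/(hnext _).2; split => //.
         by rewrite dotv_mulmx.
  + move=> x; split.
    * move=> [kx fd]; apply: (proj2 (@key _ _ A K b x HK Hfe)); split=> //; exact: (proj1 (Hd _) fd).
    * move=> H; have [kx gx] := (@key _ _ A K b x HK Hfe).1 H; split=> //; exact: (proj2 (Hd _) gx).
Qed.

End Aux.

Theorem mainTheorem6 (R : realType) (n m : nat) (A : 'M[R]_(n, m))
  (K : 'rV[R]_n -> Prop) (b : 'rV[R]_m) :
  (forall y : 'rV[R]_m, exists X : 'rV[R]_n, X *m A = y) ->
  is_convex_cone K ->
  (exists X, feas_set A K b X) ->
  forall d : nat,
    system_sd A K b d <->
    face_sd (image_set A K) (min_face (fun z => z = b) (image_set A K)) d.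
Proof.
move=> _ HK Hfe d.
have E := fun d0 => @equiv _ n m A K b d0 HK Hfe.
split; move=> [h1 h2]; split.
- exact: (proj1 (E d) h1).
- move=> d' lt H; apply: (h2 d' lt); exact: (proj2 (E d') H).
- exact: (proj2 (E d) h1).
- move=> d' lt H; apply: (h2 d' lt); exact: (proj1 (E d') H).
Qed.
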